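(* For any sets $A_1,A_2\subset\mathbb R^n$ whose Euclidean distance $d:=\inf\{|x-z|:x\in A_1,z\in A_2\}$ is positive, $$c_\alpha(A_1)+c_\alpha(A_2)\le c_\alpha(A_1\cup A_2)\left[1+\frac{\max\{c_\alpha(A_1),c_\alpha(A_2)\}}{d^{\,n-\alpha}}\right].$$
   Context: Standing assumptions: $n\ge3$, $\alpha\in(0,2]$, and $\kappa_\alpha(x,y)=|x-y|^{\alpha-n}$ is the Riesz kernel on $\mathbb R^n$. The energy of a positive Radon measure $\mu$ is $\|\mu\|_\alpha^2=\iint\kappa_\alpha\,d\mu\,d\mu$; $\mathcal E^+_\alpha(A)$ is the set of positive measures of finite energy concentrated on $A$. The inner capacity of $A\subset\mathbb R^n$ is defined by $1/c_\alpha(A)=\inf\{\|\mu\|_\alpha^2:\ \mu\in\mathcal E^+_\alpha(A),\ \mu(\mathbb R^n)=1\}$ (with values in $[0,\infty]$). *)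

(* Defs.v *)
From HB Require Import structures.
From mathcomp Require Import all_boot all_order all_algebra.
From mathcomp Require Import all_classical all_reals all_analysis.
Set Implicit Arguments. Unset Strict Implicit. Unset Printing Implicit Defensive.
Import Order.TTheory GRing.Theory Num.Theory.
Import numFieldNormedType.Exports.
Local Open Scope classical_set_scope.
Local Open Scope ring_scope.

(* R^n is modelled as row vectors 'rV[R]_n; [Rn R n] is the same carrier
   equipped with the Borel sigma-algebra (generated by the open sets of the
   usual topology of 'rV[R]_n, which coincides with the Euclidean one). *)
Definition Rn (R : realType) (n : nat) := g_sigma_algebraType (@open 'rV[R]_n).

Definition edist (R : realType) (n : nat) (x y : 'rV[R]_n) : R :=
  Num.sqrt (\sum_(i < n) (x ord0 i - y ord0 i) ^+ 2).

Definition riesz_kernel (R : realType) (n : nat) (alpha : R)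
  (x y : 'rV[R]_n) : \bar R :=
  if x == y then +oo%E else ((edist x y) `^ (alpha - n%:R))%:E.

Definition energy (R : realType) (n : nat) (alpha : R)
  (mu : {measure set (Rn R n) -> \bar R}) : \bar R :=
  (\int[mu]_x \int[mu]_y riesz_kernel alpha x y)%E.

(* Positive Radon measures of finite energy, concentrated on A, of unit mass. *)
Definition admissible (R : realType) (n : nat) (alpha : R) (A : set 'rV[R]_n)
  (mu : {measure set (Rn R n) -> \bar R}) : Prop :=
  [/\ (forall K : set 'rV[R]_n, compact K -> (mu K < +oo)%E),
      (energy alpha mu < +oo)%E,
      mu.-negligible (~` A : set (Rn R n)) &
      mu setT = 1%E].

Definition capacity (R : realType) (n : nat) (alpha : R) (A : set 'rV[R]_n)
  : \bar R :=
  ((ereal_inf [set energy alpha mu | mu in admissible alpha A])^-1)%E.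

Definition set_dist (R : realType) (n : nat) (A1 A2 : set 'rV[R]_n) : \bar R :=
  ereal_inf [set (edist x z)%:E | x in A1 & z in A2].

(* Main.v *)
Require Import Defs.
From HB Require Import structures.
From mathcomp Require Import all_boot all_order all_algebra.
From mathcomp Require Import all_classical all_reals all_analysis.
From mathcomp Require Import measurable_realfun.
From mathcomp Require Import ring lra.
Import Order.TTheory GRing.Theory Num.Theory.
Import numFieldNormedType.Exports.
Local Open Scope classical_set_scope.
Local Open Scope ring_scope.


Section meas.
Variables (R : realType) (n : nat).
Local Notation T := (Rn R n).

Lemma coord_meas (i : 'I_n) : measurable_fun [set: T] (fun x : T => (x : 'rV[R]_n) ord0 i).
Proof.
apply: (measurability _ (RGenOpens.measurableE R)).
move=> _ [_ [a [b ->] <-]]; rewrite setTI.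
apply: sub_sigma_algebra.
have := @coord_continuous R 1 n ord0 i.
move=> /continuousP; apply; exact: interval_open.
Qed.

Definition ssq (x y : 'rV[R]_n) : R := \sum_(i < n) (x ord0 i - y ord0 i) ^+ 2.

Lemma ssq_eq0 (x y : 'rV[R]_n) : (ssq x y == 0) = (x == y).
Proof.
rewrite /ssq psumr_eq0; last by move=> i _; exact: sqr_ge0.
apply/idP/idP.
- move=> /allP H; apply/eqP/rowP => j.
  have := H j (mem_index_enum j); rewrite sqrf_eq0 subr_eq0 => /eqP.
  by [].
- by move=> /eqP ->; apply/allP => j _; rewrite subrr expr0n eqxx.
Qed.

Definition hk (alpha : R) (u : R) : \bar R :=
  if u == 0 then +oo%E else ((Num.sqrt u) `^ (alpha - n%:R))%:E.

Lemma kernelE alpha (x y : 'rV[R]_n) : riesz_kernel alpha x y = hk alpha (ssq x y).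
Proof. by rewrite /riesz_kernel /hk ssq_eq0. Qed.

Lemma hk_meas alpha : measurable_fun [set: R] (hk alpha).
Proof.
apply: measurable_fun_ifT.
- have := measurable_fun_eqr (@measurable_id _ R setT) (@measurable_cst _ _ R _ setT (0:R)). exact.
- exact: measurable_cst.
- apply/measurable_EFinP.
  exact: (measurableT_comp (measurable_powR (alpha - n%:R)) (continuous_measurable_fun (@sqrt_continuous R))).
Qed.

Lemma ssq_meas : measurable_fun [set: (T * T)%type] (fun z : (T * T)%type => ssq z.1 z.2).
Proof.
apply: measurable_sum => i; apply: measurable_funX; apply: measurable_funB.
- exact: measurableT_comp (coord_meas i) measurable_fst.
- exact: measurableT_comp (coord_meas i) measurable_snd.
Qed.

Lemma kernel_meas alpha :
  measurable_fun [set: (T * T)%type] (fun z : (T * T)%type => riesz_kernel alpha z.1 z.2).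
Proof.
rewrite (_ : (fun z : (T * T)%type => _) = hk alpha \o (fun z : (T * T)%type => ssq z.1 z.2)).
  exact: measurableT_comp (hk_meas alpha) ssq_meas.
by apply/funext => z; rewrite /= kernelE.
Qed.

End meas.


Section finF.
Context d1 d2 (T1 : measurableType d1) (T2 : measurableType d2) (R : realType).
Variable m2 : {measure set T2 -> \bar R}.
Hypothesis h2 : fin_num_fun m2.
Definition m2f (A : set T2) := m2 A.
HB.instance Definition _ := Measure.on m2f.
HB.instance Definition _ := @Measure_isFinite.Build _ T2 R m2f h2.
Lemma finF (f : (T1 * T2)%type -> \bar R) : measurable_fun setT f -> (forall x, 0 <= f x)%E ->
  measurable_fun setT (fun x => \int[m2]_y f (x, y))%E.
Proof.
move=> mf f0.
have H := measurable_fun_fubini_tonelli_F (m2 := m2f) f mf f0. exact H.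
Qed.
End finF.

Section integ.
Variables (R : realType) (n : nat) (alpha : R).
Local Notation T := (Rn R n).
Local Notation kk := (@riesz_kernel R n alpha).
Local Open Scope ereal_scope.

Lemma kk_ge0 x y : 0 <= kk x y.
Proof. rewrite /riesz_kernel; case: ifP => // _; rewrite lee_fin; exact: powR_ge0. Qed.

Lemma inner_meas (x : T) : measurable_fun [set: T] (fun y : T => kk x y).
Proof. exact: (measurable_fun_pair2 x (kernel_meas R n alpha)). Qed.

Definition FF (mu : {measure set T -> \bar R}) (x : T) := \int[mu]_y kk x y.

Lemma FF_ge0 mu x : 0 <= FF mu x.
Proof. by apply: integral_ge0 => y _; exact: kk_ge0. Qed.

Lemma FF_meas (mu : {measure set T -> \bar R}) : fin_num_fun mu -> measurable_fun [set: T] (FF mu).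
Proof.
move=> h.
have := @finF _ _ T T R mu h (fun z : (T * T)%type => kk z.1 z.2) (kernel_meas R n alpha) (fun z => kk_ge0 z.1 z.2).
by [].
Qed.

Lemma ae_neg (mu : {measure set T -> \bar R}) (A : set T) (P : T -> Prop) :
  mu.-negligible (~` A) -> (forall x, A x -> P x) -> {ae mu, forall x, P x}.
Proof.
move=> neg HP; apply: negligibleS neg => x /= nPx Ax; apply: nPx; exact: HP.
Qed.


Lemma fin1 (mu : {measure set T -> \bar R}) : mu setT = 1 -> fin_num_fun mu.
Proof.
move=> h A mA; rewrite ge0_fin_numE; last exact: measure_ge0.
apply: (le_lt_trans (le_measure _ _ _ (subsetT A))); rewrite ?inE //; exact: (eq_ind_r (fun z => z < +oo) (ltry 1%R) h).
Qed.

Lemma cst_le (mu : {measure set T -> \bar R}) (A : set T) (f : T -> \bar R) (Dr : R) :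
  (0 <= Dr)%R -> mu setT = 1 -> mu.-negligible (~` A) ->
  measurable_fun setT f -> (forall x, 0 <= f x) ->
  (forall x, A x -> f x <= Dr%:E) -> \int[mu]_x f x <= Dr%:E.
Proof.
move=> D0 m1 neg mf f0 fD.
have -> : Dr%:E = \int[mu]_x (cst Dr%:E x) by rewrite integral_cst // m1 mule1.
apply: ae_ge0_le_integral => //. all: try (by move=> x _; rewrite lee_fin). all: try exact: measurable_cst.
case: neg => N [mN N0 sub]; exists N; split => // x /= H; apply: sub => Ax; apply: H => _; exact: fD.
Qed.

Lemma cross_le (mu1 mu2 : {measure set T -> \bar R}) (A1 A2 : set T) (Dr : R) :
  (0 <= Dr)%R -> mu1 setT = 1 -> mu2 setT = 1 -> mu1.-negligible (~` A1) ->
  mu2.-negligible (~` A2) -> (forall x y, A1 x -> A2 y -> kk x y <= Dr%:E) ->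
  \int[mu1]_x FF mu2 x <= Dr%:E.
Proof.
move=> D0 h1 h2 n1 n2 H.
apply: (@cst_le mu1 A1 (FF mu2) Dr D0 h1 n1).
- exact: (@FF_meas mu2 (@fin1 mu2 h2)).
- exact: FF_ge0.
move=> x Ax; apply: (@cst_le mu2 A2 (kk x) Dr D0 h2 n2).
- exact: inner_meas.
- exact: kk_ge0.
- by move=> y Ay; exact: H.
Qed.

End integ.


Section mix.
Variables (R : realType) (n : nat) (alpha : R).
Local Notation T := (Rn R n).
Local Notation kk := (@riesz_kernel R n alpha).
Local Notation FFa := (@FF R n alpha).
Local Open Scope ereal_scope.

Lemma energy_mix (mu1 mu2 : {measure set T -> \bar R}) (t s : {nonneg R})
  (e1 e2 Dr : R) : mu1 setT = 1 -> mu2 setT = 1 ->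
  energy alpha mu1 <= e1%:E -> energy alpha mu2 <= e2%:E ->
  \int[mu1]_x FFa mu2 x <= Dr%:E -> \int[mu2]_x FFa mu1 x <= Dr%:E ->
  energy alpha (measure_add (mscale t mu1) (mscale s mu2)) <=
   (t%:num ^+ 2 * e1 + 2 * t%:num * s%:num * Dr + s%:num ^+ 2 * e2)%:E.
Proof.
move=> h1 h2 E1 E2 C1 C2.
have m1 := @FF_meas R n alpha mu1 (@fin1 R n mu1 h1).
have m2 := @FF_meas R n alpha mu2 (@fin1 R n mu2 h2).
have inner : forall x, \int[measure_add (mscale t mu1) (mscale s mu2)]_y kk x y =
  t%:num%:E * FFa mu1 x + s%:num%:E * FFa mu2 x.
  move=> x; rewrite ge0_integral_measure_add //; last first.
    exact: inner_meas.
    by move=> y _; exact: kk_ge0.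
  rewrite !ge0_integral_mscale //.
  - exact: inner_meas.
  - by move=> y _; exact: kk_ge0.
  - exact: inner_meas.
  - by move=> y _; exact: kk_ge0.
rewrite /energy.
under eq_integral do rewrite inner.
have mG : measurable_fun setT (fun x => t%:num%:E * FFa mu1 x + s%:num%:E * FFa mu2 x).
  by apply: emeasurable_funD; apply: measurable_funeM.
have G0 : forall x, setT x -> 0 <= t%:num%:E * FFa mu1 x + s%:num%:E * FFa mu2 x.
  by move=> x _; apply: adde_ge0; apply: mule_ge0 => //; exact: FF_ge0.
rewrite ge0_integral_measure_add // !ge0_integral_mscale //.
rewrite !ge0_integralD //; last 8 first.
all: try (by move=> x _; apply: mule_ge0 => //; exact: FF_ge0).
all: try (by apply: measurable_funeM).
rewrite !ge0_integralZl //; last 4 first.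
all: try (by move=> x _; exact: FF_ge0).
have E1' : \int[mu1]_x FFa mu1 x <= e1%:E := E1.
have E2' : \int[mu2]_x FFa mu2 x <= e2%:E := E2.
have I0 : forall (m mu : {measure set T -> \bar R}), 0 <= \int[m]_x FFa mu x.
  by move=> m mu; apply: integral_ge0 => x _; exact: FF_ge0.
have t0 : 0 <= (t%:num)%:E by rewrite lee_fin.
have s0 : 0 <= (s%:num)%:E by rewrite lee_fin.
apply: (@le_trans _ _ ((t%:num)%:E * ((t%:num)%:E * e1%:E + (s%:num)%:E * Dr%:E) +
   (s%:num)%:E * ((t%:num)%:E * Dr%:E + (s%:num)%:E * e2%:E))).
  apply: leeD; apply: lee_pmul => //; do ?[by apply: adde_ge0; apply: mule_ge0];
    apply: leeD; apply: lee_pmul => //.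
rewrite -!EFinM -!EFinD lee_fin.
rewrite le_eqVlt; apply/orP; left; apply/eqP; ring.
Qed.
End mix.


Section main.
Variables (R : realType) (n : nat) (alpha : R).
Local Notation T := (Rn R n).
Local Notation kk := (@riesz_kernel R n alpha).
Local Notation edist := (@Defs.edist R n).
Local Open Scope ereal_scope.

Definition WW (A : set 'rV[R]_n) := ereal_inf [set energy alpha mu | mu in admissible alpha A].

Lemma adm_sub (A B : set 'rV[R]_n) (mu : {measure set T -> \bar R}) : A `<=` B -> admissible alpha A mu -> admissible alpha B mu.
Proof.
move=> AB [h1 h2 h3 h4]; split => //.
apply: negligibleS h3; exact: subsetC.
Qed.

Lemma WW_mono (A B : set 'rV[R]_n) : A `<=` B -> WW B <= WW A.
Proof.
move=> AB; apply: ereal_inf_le_tmp => _ [mu hmu <-]; exists mu => //; exact: adm_sub hmu.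
Qed.

Lemma energy_ge0 (mu : {measure set T -> \bar R}) : 0 <= energy alpha mu.
Proof. by apply: integral_ge0 => x _; exact: FF_ge0. Qed.

Lemma WW_ge0 A : 0 <= WW A.
Proof. by apply/ereal_infP => _ [mu _ <-]; exact: energy_ge0. Qed.

Lemma adm_ne A (mu : {measure set T -> \bar R}) : admissible alpha A mu -> exists x, A x.
Proof.
case=> _ _ neg hT; apply: contrapT => nA.
have AE : ~` A = setT by apply/seteqP; split => // x _ Ax; apply: nA; exists x.
move: neg; rewrite AE => /(negligibleP _ measurableT) h0.
by move: hT; rewrite h0 => /eqP; rewrite eq_sym eqe oner_eq0.
Qed.

Lemma edistC (x y : 'rV[R]_n) : edist x y = edist y x.
Proof. by rewrite /edist; congr Num.sqrt; apply: eq_bigr => i _; rewrite -sqrrN opprB. Qed.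

Lemma edist_xx (x : 'rV[R]_n) : edist x x = 0%R.
Proof. by rewrite /edist big1 ?sqrtr0 // => i _; rewrite subrr expr0n. Qed.

Lemma kk_bound (del : R) (x y : 'rV[R]_n) : (0 < del)%R -> (0 < n%:R - alpha)%R ->
  (del <= edist x y)%R -> kk x y <= ((del `^ (n%:R - alpha))^-1)%:E.
Proof.
move=> d0 p0 dle.
rewrite /riesz_kernel; case: eqP => [exy|_].
  by move: dle; rewrite exy edist_xx => /(lt_le_trans d0); rewrite ltxx.
rewrite lee_fin -opprB powRN.
have e0 : (0 < edist x y)%R by exact: lt_le_trans dle.
rewrite lef_pV2 ?posrE ?powR_gt0 //.
apply: ge0_ler_powR => //; [exact: ltW|rewrite nnegrE; exact: ltW|rewrite nnegrE; exact: ltW].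
Qed.


Lemma null_sub (mu : {measure set T -> \bar R}) (N M : set T) : measurable N -> measurable M ->
  M `<=` N -> mu N = 0 -> mu M = 0.
Proof.
move=> mN mM MN N0; apply/eqP; rewrite eq_le measure_ge0 andbT -N0.
by apply: le_measure; rewrite ?inE.
Qed.

Lemma mix_adm A1 A2 (mu1 mu2 : {measure set T -> \bar R}) (t s : {nonneg R}) :
  admissible alpha A1 mu1 -> admissible alpha A2 mu2 -> (t%:num + s%:num = 1)%R ->
  energy alpha (measure_add (mscale t mu1) (mscale s mu2)) < +oo ->
  admissible alpha (A1 `|` A2) (measure_add (mscale t mu1) (mscale s mu2)).
Proof.
case=> c1 _ n1 h1 [c2 _ n2 h2] ts fin; split => //.
- move=> K cK; change (measure_add (mscale t mu1) (mscale s mu2) K < +oo).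
  have -> : measure_add (mscale t mu1) (mscale s mu2) K = (t%:num)%:E * mu1 K + (s%:num)%:E * mu2 K.
    exact: measure_addE.
  apply: lte_add_pinfty; apply: lte_mul_pinfty => //; rewrite ?lee_fin //.
  + exact: c1.
  + exact: c2.
- case: n1 => N1 [mN1 N10 s1]; case: n2 => N2 [mN2 N20 s2].
  have mI : measurable (N1 `&` N2) by exact: measurableI.
  exists (N1 `&` N2); split => //.
    change (measure_add (mscale t mu1) (mscale s mu2) (N1 `&` N2) = 0).
    rewrite measure_addE.
    change ((t%:num)%:E * mu1 (N1 `&` N2) + (s%:num)%:E * mu2 (N1 `&` N2) = 0).
    have z1 : mu1 (N1 `&` N2) = 0 := @null_sub mu1 N1 _ mN1 mI (@subIsetl _ _ _) N10.
    have z2 : mu2 (N1 `&` N2) = 0 := @null_sub mu2 N2 _ mN2 mI (@subIsetr _ _ _) N20.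
    by rewrite z1 z2 !mule0 adde0.
  by rewrite setCU; exact: setISS.
- change (measure_add (mscale t mu1) (mscale s mu2) setT = 1).
  rewrite measure_addE.
  change ((t%:num)%:E * mu1 setT + (s%:num)%:E * mu2 setT = 1).
  have -> : mu1 setT = 1 by exact: h1.
  have -> : mu2 setT = 1 by exact: h2.
  by rewrite !mule1 -EFinD ts.
Qed.


Lemma pair_bound A1 A2 (mu1 mu2 : {measure set T -> \bar R}) (w Dr e1 e2 : R) :
  (0 <= Dr)%R ->
  (forall mu : {measure set T -> \bar R}, admissible alpha (A1 `|` A2) mu -> w%:E <= energy alpha mu) ->
  (forall x y, A1 x -> A2 y -> kk x y <= Dr%:E) ->
  (forall x y, A2 x -> A1 y -> kk x y <= Dr%:E) ->
  admissible alpha A1 mu1 -> admissible alpha A2 mu2 ->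
  energy alpha mu1 = e1%:E -> energy alpha mu2 = e2%:E -> (0 < e1)%R -> (0 < e2)%R ->
  (w * (e1^-1 + e2^-1) ^+ 2 <= (e1^-1 + e2^-1) + 2 * e1^-1 * e2^-1 * Dr)%R.
Proof.
move=> D0 Hw K12 K21 ad1 ad2 E1 E2 e10 e20.
have S0 : (0 < e1 + e2)%R by exact: addr_gt0.
have t0 : (0 <= e2 / (e1 + e2))%R by apply: divr_ge0; exact: ltW.
have s0 : (0 <= e1 / (e1 + e2))%R by apply: divr_ge0; exact: ltW.
pose t := NngNum t0. pose s := NngNum s0.
have ts : (t%:num + s%:num = 1)%R.
  rewrite /= -mulrDl addrC divff //; exact: lt0r_neq0.
case: (ad1) => _ _ n1 h1. case: (ad2) => _ _ n2 h2.
have E1' : energy alpha mu1 <= e1%:E by rewrite E1.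
have E2' : energy alpha mu2 <= e2%:E by rewrite E2.
have EB := @energy_mix R n alpha mu1 mu2 t s e1 e2 Dr h1 h2 E1' E2'
  (@cross_le R n alpha mu1 mu2 A1 A2 Dr D0 h1 h2 n1 n2 K12)
  (@cross_le R n alpha mu2 mu1 A2 A1 Dr D0 h2 h1 n2 n1 K21).
have adm := @mix_adm A1 A2 mu1 mu2 t s ad1 ad2 ts (le_lt_trans EB (ltry _)).
have := le_trans (Hw _ adm) EB; rewrite lee_fin /= => wQ.
have uv0 : (0 < (e1^-1 + e2^-1) ^+ 2)%R.
  by apply: exprn_gt0; apply: addr_gt0; rewrite invr_gt0.
apply: le_trans (ler_wpM2r (ltW uv0) wQ) _.
rewrite le_eqVlt; apply/orP; left; apply/eqP.
field.
by rewrite !lt0r_neq0.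
Qed.

End main.


Lemma real_step (R : realType) (w u v M Dr : R) : 0 < w -> 0 < u -> 0 < v -> u <= M -> v <= M ->
  0 <= Dr -> w * (u + v) ^+ 2 <= (u + v) + 2 * u * v * Dr -> u + v <= w^-1 * (1 + M * Dr).
Proof.
move=> w0 u0 v0 uM vM D0 H.
have uv0 : 0 < u + v by exact: addr_gt0.
have H2 : (u + v) * (w * (u + v)) <= (u + v) * (1 + M * Dr).
  have : 2 * u * v * Dr <= (u + v) * M * Dr.
    apply: ler_wpM2r => //.
    have : u * v <= u * M by apply: ler_wpM2l => //; exact: ltW.
    have : u * v <= v * M by rewrite mulrC; apply: ler_wpM2l => //; exact: ltW.
    lra.
  move: H; rewrite expr2. lra.
have H3 : w * (u + v) <= 1 + M * Dr by rewrite -(ler_pM2l uv0).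
by rewrite ler_pdivlMl // mulrC.
Qed.

Section invinf.
Local Open Scope ereal_scope.
Lemma inv_inf_le (R : realType) (S : set \bar R) (w c : R) : ereal_inf S = w%:E -> (0 < w)%R ->
  (exists y, S y) ->
  (forall y, S y -> exists e, y = e%:E /\ (0 < e)%R /\ (e^-1 <= c)%R) -> (w^-1 <= c)%R.
Proof.
move=> Sw w0 [y0 Sy0] H.
have [e0 [_ [e00 e0c]]] := H y0 Sy0.
have c0 : (0 < c)%R by apply: lt_le_trans e0c; rewrite invr_gt0.
have : (c^-1)%:E <= ereal_inf S.
  apply/ereal_infP => y Sy; have [e [-> [e0' ec]]] := H y Sy.
  by rewrite lee_fin -(lef_pV2 (x:=e)) ?invrK ?posrE ?invr_gt0.
rewrite Sw lee_fin => cw.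
by rewrite -[c]invrK lef_pV2 ?posrE ?invr_gt0.
Qed.
End invinf.

Theorem mainTheorem5 (R : realType) (n : nat) (alpha : R)
  (hn : (3 <= n)%N) (halpha : 0 < alpha <= 2)
  (A1 A2 : set 'rV[R]_n) (hd : (0 < set_dist A1 A2)%E) :
  (capacity alpha A1 + capacity alpha A2 <=
   capacity alpha (A1 `|` A2) *
     (1 + maxe (capacity alpha A1) (capacity alpha A2) /
            poweR (set_dist A1 A2) (n%:R - alpha)))%E.
Proof.
Local Open Scope ereal_scope.
have capE : forall A, capacity alpha A = (@WW R n alpha A)^-1 by [].
rewrite !capE.
have W0 := @WW_ge0 R n alpha (A1 `|` A2).
have W10 := @WW_ge0 R n alpha A1.
have W20 := @WW_ge0 R n alpha A2.
have WW1 : @WW R n alpha (A1 `|` A2) <= @WW R n alpha A1 by apply: WW_mono; exact: subsetUl.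
have WW2 : @WW R n alpha (A1 `|` A2) <= @WW R n alpha A2 by apply: WW_mono; exact: subsetUr.
have Wlb : forall A (mu : {measure set Rn R n -> \bar R}), admissible alpha A mu -> @WW R n alpha A <= energy alpha mu.
  by move=> A mu ad; apply: ereal_inf_lbound; exists mu.
set W := @WW R n alpha (A1 `|` A2) in W0 WW1 WW2 *.
set W1 := @WW R n alpha A1 in W10 WW1 *.
set W2 := @WW R n alpha A2 in W20 WW2 *.
set P := poweR (set_dist A1 A2) (n%:R - alpha).
have fac1 : 1 <= 1 + maxe W1^-1 W2^-1 / P.
  apply: leeDl; apply: mule_ge0; last by rewrite inve_ge0 poweR_ge0.
  rewrite le_max; apply/orP; left; have := inve_ge0 W1; rewrite W10; exact.
have [W_0|Wpos] : W = 0 \/ 0 < W.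
  by case: (eqVneq W 0) => [->|Wn0]; [left|right; rewrite lt_neqAle eq_sym Wn0 W0].
  by rewrite W_0 inve0 gt0_mulye ?leey //; apply: lt_le_trans fac1; exact: lte01.
have W1pos : 0 < W1 by exact: lt_le_trans WW1.
have W2pos : 0 < W2 by exact: lt_le_trans WW2.
have Winv2 : W2^-1 <= W^-1 by rewrite lee_pV2 ?inE.
have Winv1 : W1^-1 <= W^-1 by rewrite lee_pV2 ?inE.
case: (eqVneq W1 +oo) => [W1oo|W1n].
  rewrite {1}W1oo (_ : (+oo : \bar R)^-1 = 0) // add0e.
  apply: le_trans Winv2 _; apply: lee_pemulr => //; rewrite inve_ge0 //.
case: (eqVneq W2 +oo) => [W2oo|W2n].
  rewrite {1}W2oo (_ : (+oo : \bar R)^-1 = 0) // adde0.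
  apply: le_trans Winv1 _; apply: lee_pemulr => //; rewrite inve_ge0 //.
have W1f : W1 \is a fin_num by rewrite ge0_fin_numE // ltey.
have W2f : W2 \is a fin_num by rewrite ge0_fin_numE // ltey.
have Wf : W \is a fin_num by rewrite ge0_fin_numE //; apply: le_lt_trans WW1 _; rewrite ltey.
set w1 := fine W1. set w2 := fine W2. set w := fine W.
have W1E : W1 = w1%:E by rewrite fineK.
have W2E : W2 = w2%:E by rewrite fineK.
have WE : W = w%:E by rewrite fineK.
have w0 : (0 < w)%R by rewrite -lte_fin -WE.
have w10 : (0 < w1)%R by rewrite -lte_fin -W1E.
have w20 : (0 < w2)%R by rewrite -lte_fin -W2E.
have [y1 [mu1 ad1 _] _] : exists2 y, [set energy alpha mu | mu in admissible alpha A1] y & y < +oo.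
  by apply: ereal_inf_lt; rewrite -/W1 ltey.
have [y2 [mu2 ad2 _] _] : exists2 y, [set energy alpha mu | mu in admissible alpha A2] y & y < +oo.
  by apply: ereal_inf_lt; rewrite -/W2 ltey.
have [a1 Aa1] := @adm_ne R n alpha A1 mu1 ad1.
have [a2 Aa2] := @adm_ne R n alpha A2 mu2 ad2.
set SD := set_dist A1 A2 in hd P fac1 *.
have SDle : forall x z, A1 x -> A2 z -> SD <= (Defs.edist x z)%:E.
  by move=> x z Ax Az; apply: ereal_inf_lbound; exists x => //; exists z.
have SDf : SD \is a fin_num.
  rewrite ge0_fin_numE ?(ltW hd) //; apply: le_lt_trans (SDle _ _ Aa1 Aa2) _; exact: ltry.
set del := fine SD.
have SDE : SD = del%:E by rewrite fineK.
have d0 : (0 < del)%R by rewrite -lte_fin -SDE.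
have hdel : forall x z, A1 x -> A2 z -> (del <= Defs.edist x z)%R.
  by move=> x z Ax Az; rewrite -lee_fin -SDE; exact: SDle.
have p0 : (0 < n%:R - alpha)%R.
  have : (3%:R <= n%:R :> R)%R by rewrite ler_nat.
  move: halpha => /andP [_ al2]; lra.
set Dr := ((del `^ (n%:R - alpha))^-1)%R.
have D0 : (0 <= Dr)%R by rewrite invr_ge0 powR_ge0.
have PE : P^-1 = Dr%:E.
  rewrite /P SDE poweR_EFin inver; case: eqP => // h.
  by move: (powR_gt0 (n%:R - alpha) d0); rewrite h ltxx.
have K12 : forall x y, A1 x -> A2 y -> riesz_kernel alpha x y <= Dr%:E.
  by move=> x y Ax Ay; apply: kk_bound => //; exact: hdel.
have K21 : forall x y, A2 x -> A1 y -> riesz_kernel alpha x y <= Dr%:E.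
  by move=> x y Ax Ay; apply: kk_bound => //; rewrite edistC; exact: hdel.
have Hw : forall mu : {measure set Rn R n -> \bar R}, admissible alpha (A1 `|` A2) mu -> w%:E <= energy alpha mu.
  by move=> mu ad; rewrite -WE; exact: Wlb.
have finE : forall A (mu : {measure set Rn R n -> \bar R}), admissible alpha A mu ->
    energy alpha mu = (fine (energy alpha mu))%:E.
  move=> A mu [_ fin _ _]; rewrite fineK // ge0_fin_numE //; exact: energy_ge0.
have geW : forall A (mu : {measure set Rn R n -> \bar R}), admissible alpha A mu ->
    @WW R n alpha A <= (fine (energy alpha mu))%:E.
  by move=> A mu ad; rewrite -(finE _ _ ad); exact: Wlb.
set M := (Num.max w1^-1 w2^-1)%R.
set K := (w^-1 * (1 + M * Dr))%R.
have key : forall (m1 m2 : {measure set Rn R n -> \bar R}), admissible alpha A1 m1 ->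
    admissible alpha A2 m2 -> ((fine (energy alpha m1))^-1 + (fine (energy alpha m2))^-1 <= K)%R.
  move=> m1 m2 ad1' ad2'.
  have E1 := finE _ _ ad1'. have E2 := finE _ _ ad2'.
  set e1 := fine (energy alpha m1) in E1 *. set e2 := fine (energy alpha m2) in E2 *.
  have we1 : (w1 <= e1)%R by rewrite -lee_fin -W1E; exact: geW ad1'.
  have we2 : (w2 <= e2)%R by rewrite -lee_fin -W2E; exact: geW ad2'.
  have e10 : (0 < e1)%R := lt_le_trans w10 we1.
  have e20 : (0 < e2)%R := lt_le_trans w20 we2.
  have pb := @pair_bound R n alpha A1 A2 m1 m2 w Dr e1 e2 D0 Hw K12 K21 ad1' ad2' E1 E2 e10 e20.
  apply: real_step => //; rewrite ?invr_gt0 //.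
  - apply: (@le_trans _ _ (w1^-1)%R); first by rewrite lef_pV2 ?posrE.
    by rewrite /M le_max lexx.
  - apply: (@le_trans _ _ (w2^-1)%R); first by rewrite lef_pV2 ?posrE.
    by rewrite /M le_max lexx orbT.
have posE : forall A (mu : {measure set Rn R n -> \bar R}) (v : R), @WW R n alpha A = v%:E -> (0 < v)%R ->
    admissible alpha A mu -> (0 < fine (energy alpha mu))%R.
  move=> A mu v WA v0 ad; rewrite -lte_fin; apply: lt_le_trans (geW _ _ ad).
  by rewrite WA lte_fin.
have stepA : forall m2 : {measure set Rn R n -> \bar R}, admissible alpha A2 m2 ->
    (w1^-1 <= K - (fine (energy alpha m2))^-1)%R.
  move=> m2 ad2'; apply: (@inv_inf_le R _ w1 _ _ w10).
  - exact: W1E.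
  - by exists (energy alpha mu1); exists mu1.
  - move=> y [m ad <-]; exists (fine (energy alpha m)); split; first exact: finE ad.
    split; first exact: (posE _ _ w1 W1E w10 ad).
    by rewrite lerBrDr; exact: key.
have stepB : (w2^-1 <= K - w1^-1)%R.
  apply: (@inv_inf_le R _ w2 _ _ w20).
  - exact: W2E.
  - by exists (energy alpha mu2); exists mu2.
  - move=> y [m ad <-]; exists (fine (energy alpha m)); split; first exact: finE ad.
    split; first exact: (posE _ _ w2 W2E w20 ad).
    have := stepA m ad; rewrite /K. lra.
rewrite W1E W2E WE !inver !gt_eqF // -EFin_max PE.
rewrite -EFinM -EFinD lee_fin.
move: stepB; rewrite /K /M. lra.
Qed.
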